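(* Let $x,y,z$ be real numbers with $0<x\le y\le z\le 1$, and let $$f(x,y,z)=x^{y}\,y^{-x}\,z^{x}\,x^{-z}\,y^{z}\,z^{-y}.$$ Then $f(x,y,z)\ge 1$, and equality $f(x,y,z)=1$ is possible only when $x=y$ or $y=z$. *)

(* Defs.v *)
(* real powers via Rpower (defined for positive bases). *)
From Stdlib Require Import Reals.
Open Scope R_scope.

Definition fxyz (x y z : R) : R :=
  Rpower x y * Rpower y (- x) * Rpower z x * Rpower x (- z)
  * Rpower y z * Rpower z (- y).

(* Main.v *)
Require Import Defs.
From Stdlib Require Import Reals Lra Psatz.
Open Scope R_scope.

Lemma ln_lt_sub1 (t : R) : 0 < t -> t <> 1 -> ln t < t - 1.
Proof.
  intros Ht Hne.
  assert (H : 1 + (t - 1) < exp (t - 1)) by (apply exp_ineq1; lra).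
  rewrite <- (ln_exp (t - 1)).
  apply ln_increasing; lra.
Qed.

Theorem lemma2 (x y z : R) (hx : 0 < x) (hxy : x <= y) (hyz : y <= z) (hz : z <= 1) :
  1 <= fxyz x y z /\ (fxyz x y z = 1 -> x = y \/ y = z).
Proof.
  assert (hy : 0 < y) by lra. assert (hz0 : 0 < z) by lra.
  set (S := y * ln x - x * ln y + x * ln z - z * ln x + z * ln y - y * ln z).
  assert (HF : fxyz x y z = exp S).
  { unfold fxyz, Rpower, S. rewrite <- !exp_plus. f_equal. ring. }
  assert (Hcase : (x = y \/ y = z) \/ (x < y /\ y < z)) by lra.
  destruct Hcase as [Heq | [Hl1 Hl2]].
  - assert (S = 0) by (unfold S; destruct Heq as [<- | <-]; ring).
    rewrite HF, H, exp_0. split; [lra | auto].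
  - assert (HA : y * (ln y - ln x) > y - x).
    { assert (E : x / y * y = x) by (field; lra).
      assert (h := ln_lt_sub1 (x / y) ltac:(apply Rdiv_lt_0_compat; lra)
                 ltac:(intro e; rewrite e in E; lra)).
      assert (ln x = ln (x / y) + ln y)
        by (rewrite <- ln_mult; [rewrite E; reflexivity | apply Rdiv_lt_0_compat; lra | lra]).
      nra. }
    assert (HB : y * (ln z - ln y) < z - y).
    { assert (E : z / y * y = z) by (field; lra).
      assert (h := ln_lt_sub1 (z / y) ltac:(apply Rdiv_lt_0_compat; lra)
                 ltac:(intro e; rewrite e in E; lra)).
      assert (ln z = ln (z / y) + ln y)
        by (rewrite <- ln_mult; [rewrite E; reflexivity | apply Rdiv_lt_0_compat; lra | lra]).
      nra. }
    assert (HS : y * S = (z - y) * (y * (ln y - ln x)) - (y - x) * (y * (ln z - ln y)))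
      by (unfold S; ring).
    assert (HS2 : y * S > 0) by nra.
    assert (S > 0) by nra.
    rewrite HF. split.
    + left. rewrite <- exp_0. apply exp_increasing. lra.
    + intro e. rewrite <- exp_0 in e. apply exp_inv in e. lra.
Qed.
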